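(* Let $(X,d)$ be a complete metric space and $f:X\to\mathbb{R}\cup\{+\infty\}$ a proper lower semicontinuous function with $\inf_Xf=0$. Then $f=\mathrm{lsc}(\mathcal{I}[f])$ on $X$, where \[\mathcal{I}[f](x):=\inf\Big\{\sum_{n=0}^\infty G[f](x_n)d(x_n,x_{n+1}):\{x_n\}_n\subset X,\ x_0=x,\ \lim_{n\to\infty}G[f](x_n)=0\Big\}.\]
   Context: Global slope: $G[f](x)=\sup_{y\neq x}\frac{(f(x)-f(y))_+}{d(x,y)}$ if $f(x)<+\infty$ and $G[f](x)=+\infty$ otherwise ($\alpha_+=\max\{\alpha,0\}$). For $g:X\to\mathbb{R}\cup\{+\infty\}$, its lower semicontinuous envelope is $\mathrm{lsc}(g)(x)=\liminf_{y\to x}g(y)$ (with $y=x$ allowed). Proper means not identically $+\infty$. *)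

(* Defs.v *)
From HB Require Import structures.
From mathcomp Require Import all_boot all_order all_algebra.
From mathcomp Require Import all_classical all_reals all_analysis.
Set Implicit Arguments. Unset Strict Implicit. Unset Printing Implicit Defensive.
Import Order.TTheory GRing.Theory Num.Theory.
Local Open Scope classical_set_scope.
Local Open Scope ring_scope.

Definition is_metric (R : realType) (X : Type) (d : X -> X -> R) : Prop :=
  (forall x y, 0 <= d x y) /\
  (forall x y, d x y = 0 <-> x = y) /\
  (forall x y, d x y = d y x) /\
  (forall x y z, d x z <= d x y + d y z).

Definition complete_metric (R : realType) (X : Type) (d : X -> X -> R) : Prop :=
  forall u : nat -> X,
    (forall e : R, 0 < e -> exists N : nat, forall m n : nat,
        (N <= m)%N -> (N <= n)%N -> d (u m) (u n) < e) ->
    exists l : X, forall e : R, 0 < e -> exists N : nat, forall n : nat,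
        (N <= n)%N -> d (u n) l < e.

Local Open Scope ereal_scope.

(* lsc(g)(x) = liminf_{y -> x} g(y) (y = x allowed)
            = sup_{r > 0} inf_{d(y,x) < r} g(y) *)
Definition lsc_env (R : realType) (X : Type) (d : X -> X -> R)
  (g : X -> \bar R) (x : X) : \bar R :=
  ereal_sup [set ereal_inf [set g y | y in [set y | (d y x < r)%R]]
            | r in [set r : R | (0 < r)%R]].

Definition lsc_fun (R : realType) (X : Type) (d : X -> X -> R)
  (g : X -> \bar R) : Prop :=
  forall x, g x <= lsc_env d g x.

(* Global slope G[f](x) = sup_{y <> x} (f x - f y)_+ / d(x,y) if f x < +oo,
   +oo otherwise.  (The max with 0 only matters when X is a singleton.) *)
Definition global_slope (R : realType) (X : Type) (d : X -> X -> R)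
  (f : X -> \bar R) (x : X) : \bar R :=
  if f x == +oo then +oo
  else maxe 0 (ereal_sup [set maxe (f x - f y) 0 * ((d x y)^-1)%:E
                         | y in [set y | y <> x]]).

Definition I_fun (R : realType) (X : Type) (d : X -> X -> R)
  (f : X -> \bar R) (x : X) : \bar R :=
  ereal_inf [set \sum_(0 <= n <oo) (global_slope d f (xs n) * (d (xs n) (xs n.+1))%:E)
            | xs in [set xs : nat -> X | xs 0%N = x /\
                      (fun n => global_slope d f (xs n)) @ \oo --> (0 : \bar R)]].

(* Main.v *)
Require Import Defs.
From HB Require Import structures.
From mathcomp Require Import all_boot all_order all_algebra.
From mathcomp Require Import all_classical all_reals all_analysis.
From mathcomp Require Import ring lra.
Import Order.TTheory GRing.Theory Num.Theory.
Local Open Scope classical_set_scope.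
Local Open Scope ereal_scope.

Section Aux.
End Aux.

Lemma gs_ge0 (R : realType) (X : Type) (d : X -> X -> R) (f : X -> \bar R) x :
  0 <= global_slope d f x.
Proof.
rewrite /global_slope; case: ifP => _; first exact: leey.
by rewrite le_max lexx.
Qed.

Lemma gs_inf (R : realType) (X : Type) (d : X -> X -> R) (f : X -> \bar R) x :
  f x = +oo -> global_slope d f x = +oo.
Proof. by move=> h; rewrite /global_slope h eqxx. Qed.

Lemma gs_lb (R : realType) (X : Type) (d : X -> X -> R) (f : X -> \bar R) x y
  (a b : R) : is_metric d -> f x = a%:E -> f y = b%:E -> y <> x ->
  (((a - b) / d x y)%R)%:E <= global_slope d f x.
Proof.
move=> [d0 [deq [dsym dtri]]] fx fy yx.
have dp : (0 < d x y)%R.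
  rewrite lt_def d0 andbT; apply/eqP => /deq h; exact: yx (esym h).
rewrite /global_slope fx /=.
rewrite le_max; apply/orP; right.
apply: le_trans; last first.
  apply: ereal_sup_ubound; exists y => //.
rewrite fy /= EFinM.
apply: lee_wpmul2r; first by rewrite lee_fin invr_ge0 ltW.
by rewrite le_max lexx.
Qed.

Lemma gs_ub (R : realType) (X : Type) (d : X -> X -> R) (f : X -> \bar R) x
  (lam : R) : is_metric d -> (forall z, f z != -oo) -> f x != +oo -> (0 <= lam)%R ->
  (forall z, f x <= f z + (lam * d x z)%:E) -> global_slope d f x <= lam%:E.
Proof.
move=> [d0 [deq [dsym dtri]]] fnoo fx lam0 H.
rewrite /global_slope (negbTE fx) ge_max lee_fin lam0 /=.
apply: ge_ereal_sup => _ [y yx <-].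
have dp : (0 < d x y)%R.
  rewrite lt_def d0 andbT; apply/eqP => /deq h; exact: yx (esym h).
have := H y; have := fnoo y; have := fnoo x.
case: (f x) fx => // a _ _; case: (f y) => // [b _|_ _]; last first.
  by rewrite /= addeNy maxEle leNye mul0e lee_fin.
rewrite -EFinD -EFinB lee_fin => hb.
rewrite /= maxEle lee_fin; case: ifP => _.
  by rewrite mul0e lee_fin.
rewrite -EFinM lee_fin ler_pdivrMr //.
lra.
Qed.

Lemma ekeland (R : realType) (X : Type) (d : X -> X -> R) (f : X -> \bar R)
  (lam : R) x0 :
  is_metric d -> complete_metric d -> lsc_fun d f -> (forall z, 0 <= f z) ->
  f x0 != +oo -> (0 < lam)%R ->
  exists y, f y + (lam * d x0 y)%:E <= f x0 /\
            forall z, f y <= f z + (lam * d y z)%:E.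
Proof.
move=> [d0 [deq [dsym dtri]]] cpl lsc f0 fx0 lam0.
pose S u z := f z + (lam * d u z)%:E <= f u.
pose e := fun n : nat => ((n.+1%:R)^-1 : R)%R.
have e0 n : (0 < e n)%R by rewrite /e invr_gt0 ltr0n.
have Sref u : S u u.
  by rewrite /S (proj2 (deq u u) erefl) mulr0 adde0.
have finE z : f z != +oo -> f z = (fine (f z))%:E.
  by move=> h; rewrite fineK // ge0_fin_numE // ltey.
have Snest u v z : S u v -> S v z -> S u z.
  rewrite /S => h1 h2; apply: le_trans h1.
  apply: le_trans (_ : f z + (lam * d v z)%:E + (lam * d u v)%:E <= _); last first.
    exact: leeD2r.
  rewrite -addeA -EFinD; apply: leeD2l; rewrite lee_fin -mulrDr.
  by rewrite ler_pM2l // addrC dtri.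
have step : forall p : X * nat, exists v, f p.1 != +oo ->
    S p.1 v /\ forall z, S p.1 z -> f v <= f z + (e p.2)%:E.
  move=> [u n] /=; case: (boolP (f u == +oo)) => [_|fu]; first by exists u.
  pose m := ereal_inf [set f z | z in S u].
  have m0 : 0 <= m by apply: le_ereal_inf_tmp => _ [z _ <-]; exact: f0.
  have mu : m <= f u by apply: ereal_inf_lbound; exists u => //.
  have mfin : m \is a fin_num.
    by rewrite ge0_fin_numE // (le_lt_trans mu) // ltey.
  have : m < m + (e n)%:E by rewrite lteDl // lte_fin.
  case/ereal_inf_lt => _ [v Sv <-] fv; exists v => _; split => // z Sz.
  apply: le_trans (ltW fv) _; apply: leeD2r; apply: ereal_inf_lbound.
  by exists z.
have [g hg] := choice step.
pose u := fix u n := if n is k.+1 then g (u k, k) else x0.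
have uS : forall n, u n.+1 = g (u n, n) by [].
have ufin : forall n, f (u n) != +oo.
  elim => [//|n IH]; rewrite uS.
  have [Sv _] := hg (u n, n) IH.
  rewrite -ltey; apply: le_lt_trans (leeDl _ _) (le_lt_trans Sv _).
    by rewrite lee_fin mulr_ge0 // ltW.
  by rewrite /= ltey.
have Sn n : S (u n) (u n.+1) by rewrite uS; exact: (hg (u n, n) (ufin n)).1.
have Smin n z : S (u n) z -> f (u n.+1) <= f z + (e n)%:E.
  by rewrite uS; exact: (hg (u n, n) (ufin n)).2.
have chain n k : S (u n) (u (k + n)%N).
  elim: k => [|k IH]; first exact: Sref.
  exact: Snest IH (Sn _).
have small n z : S (u n.+1) z -> (lam * d (u n.+1) z <= e n)%R.
  move=> Sz; have := Smin n z (Snest _ _ _ (Sn n) Sz).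
  have fz : f z \is a fin_num.
    rewrite ge0_fin_numE // (le_lt_trans (leeDl _ _) (le_lt_trans Sz _)) //.
      by rewrite lee_fin mulr_ge0 // ltW.
    by rewrite ltey.
  move=> h; have := le_trans Sz h; rewrite leeD2lE // lee_fin //.
have cauchy : forall eps : R, (0 < eps)%R -> exists N : nat, forall m n : nat,
    (N <= m)%N -> (N <= n)%N -> (d (u m) (u n) < eps)%R.
  move=> eps eps0.
  have [k hk] : exists k : nat, (0 + e k < eps * lam / 2)%R.
    by apply: ltr_add_invr; rewrite divr_gt0 // mulr_gt0.
  exists k.+1 => m n hm hn.
  have := chain k.+1 (m - k.+1)%N; rewrite subnK // => /(small k) h1.
  have := chain k.+1 (n - k.+1)%N; rewrite subnK // => /(small k) h2.
  have h3 : (d (u m) (u n) <= d (u k.+1) (u m) + d (u k.+1) (u n))%R.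
    by rewrite [d (u k.+1) (u m)]dsym dtri.
  have h4 : (lam * d (u m) (u n) <= lam * d (u k.+1) (u m) + lam * d (u k.+1) (u n))%R.
    by rewrite -mulrDr ler_pM2l.
  rewrite -(ltr_pM2l lam0). 
  have : (e k < eps * lam / 2)%R by rewrite -(add0r (e k)).
  lra.
have [y hy] := cpl u cauchy.
have fuE n : f (u n) = (fine (f (u n)))%:E by apply: finE.
have closed n : S (u n) y.
  rewrite /S; set K := (fine (f (u n)) - lam * d (u n) y)%R.
  suff : f y <= K%:E.
    move=> h; apply: le_trans (leeD2r _ h) _.
    by rewrite -EFinD /K subrK -fuE.
  apply/lee_addgt0Pr => del del0.
  apply: le_trans (lsc y) _; apply: ge_ereal_sup => _ [r r0 <-].
  have ep0 : (0 < Num.min r (del / lam))%R by rewrite lt_min r0 divr_gt0.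
  have [N hN] := hy _ ep0.
  pose m := maxn N n.
  have hm := hN m (leq_maxl _ _).
  have Sm : S (u n) (u m) by have := chain n (m - n)%N; rewrite subnK // leq_maxr.
  apply: le_trans (ereal_inf_lbound _) _.
    exists (u m) => //=; apply: lt_le_trans hm _; by rewrite ge_min lexx.
  move: Sm; rewrite /S fuE [f (u n)]fuE -EFinD -EFinD !lee_fin => Sm.
  have h1 : (lam * d (u n) y <= lam * d (u n) (u m) + lam * d (u m) y)%R.
    by rewrite -mulrDr ler_pM2l // dtri.
  have h2 : (d (u m) y < del / lam)%R by apply: lt_le_trans hm _; by rewrite ge_min lexx orbT.
  rewrite ltr_pdivlMr // in h2.
  rewrite /K; lra.
exists y; split; first exact: (closed 0%N).
move=> z; rewrite leNgt; apply/negP => hz.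
have Syz : S y z by rewrite /S ltW.
have dz : d y z = 0%R.
  apply/eqP; rewrite eq_le d0 andbT leNgt; apply/negP => dp.
  have [k hk] : exists k : nat, (0 + e k < lam * d y z / 2)%R.
    by apply: ltr_add_invr; rewrite divr_gt0 // mulr_gt0.
  have h1 := small k z (Snest _ _ _ (closed k.+1) Syz).
  have h2 := small k y (closed k.+1).
  have h3 : (lam * d y z <= lam * d (u k.+1) y + lam * d (u k.+1) z)%R.
    by rewrite -mulrDr ler_pM2l // [d (u k.+1) y]dsym dtri.
  rewrite add0r in hk; lra.
have yz : y = z by apply/deq.
by move: hz; rewrite dz mulr0 adde0 yz ltxx.
Qed.

Lemma claim1 (R : realType) (X : Type) (d : X -> X -> R) (f : X -> \bar R)
  (xs : nat -> X) :
  is_metric d -> (forall z, 0 <= f z) -> ereal_inf (range f) = 0 ->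
  (fun n => global_slope d f (xs n)) @ \oo --> (0 : \bar R) ->
  f (xs 0%N) <= \sum_(0 <= n <oo)
                  (global_slope d f (xs n) * (d (xs n) (xs n.+1))%:E).
Proof.
move=> dm f0 inf0 Gcvg; have [d0 [deq [dsym dtri]]] := dm.
pose G n := global_slope d f (xs n).
pose t n := G n * (d (xs n) (xs n.+1))%:E.
have t0 n : 0 <= t n by apply: mule_ge0; [exact: gs_ge0|rewrite lee_fin d0].
pose S := \sum_(0 <= i <oo) t i.
have psumS N : (\sum_(0 <= i < N) t i)%R <= S.
  exact: (nneseries_lim_ge N (fun n _ _ => t0 n)).
change (f (xs 0%N) <= S).
case: (boolP (S == +oo)) => [/eqP->|Sfin]; first exact: leey.
have [Gfin Gfine] := (fine_cvgP _ _).1 Gcvg.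
have [N0 _ HN0] := Gfin.
have fin_all n : f (xs n) != +oo.
  apply/negP => /eqP fn.
  have inf k : f (xs (k + n)%N) = +oo.
    elim: k => [//|k IH].
    case: (eqVneq (d (xs (k + n)%N) (xs (k + n).+1)) 0%R) => [/deq <-//|dne].
    have tinf : t (k + n)%N = +oo.
      rewrite /t /G gs_inf // gt0_mulye // lte_fin lt_def dne d0 //.
    have hs : 0 <= \sum_(0 <= i < (k + n)%N) t i.
      by apply: sume_ge0 => i _; exact: t0.
    have hs' : \sum_(0 <= i < (k + n)%N) t i != -oo.
      by rewrite -ltNye (lt_le_trans _ hs) // ltNyr.
    have := psumS (k + n).+1; rewrite big_nat_recr //= tinf addey //.
    by rewrite leye_eq (negbTE Sfin).
  by have := HN0 (N0 + n)%N (leq_addr _ _); rewrite /= gs_inf ?inf.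
pose F n := fine (f (xs n)).
have fE n : f (xs n) = (F n)%:E by rewrite fineK // ge0_fin_numE // ltey.
have tlb k : ((F k - F k.+1)%:E <= t k).
  case: (eqVneq (d (xs k) (xs k.+1)) 0%R) => [/deq eqk|dne].
    by rewrite /F -eqk subrr t0.
  have dp : (0 < d (xs k) (xs k.+1))%R by rewrite lt_def dne d0.
  have ne : xs k.+1 <> xs k.
    by move=> h; move: dne; rewrite h (proj2 (deq _ _) erefl) eqxx.
  have := @gs_lb R X d f (xs k) (xs k.+1) (F k) (F k.+1) dm (fE k) (fE k.+1) ne.
  move=> /(lee_wpmul2r (x := (d (xs k) (xs k.+1))%:E)) h.
  rewrite /t /G; apply: le_trans (h _); last by rewrite lee_fin d0.
  by rewrite -EFinM divfK // gt_eqF.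
have tele N : (F 0%N - F N)%:E <= \sum_(0 <= k < N) t k.
  have h := telescope_sumr (fun k => - F k)%R (leq0n N).
  have -> : (F 0%N - F N = \sum_(0 <= k < N) (F k - F k.+1))%R.
    rewrite (_ : (F 0%N - F N) = (- F N - - F 0%N))%R; last by rewrite opprK addrC.
    rewrite -h; apply: eq_bigr => k _; by rewrite opprK addrC.
  by rewrite -sumEFin; apply: lee_sum => k _; exact: tlb.
suff key : forall eps : R, (0 < eps)%R -> exists N, (F N <= eps)%R.
  apply/lee_addgt0Pr => eps eps0; have [N hN] := key eps eps0.
  rewrite fE -(subrK (F N) (F 0%N)) EFinD; apply: leeD.
    exact: le_trans (tele N) (psumS N).
  by rewrite lee_fin.
move=> eps eps0; apply/not_existsP => H.
have hF N : (eps < F N)%R by rewrite ltNge; apply/negP; exact: H.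
pose c := (eps / 2)%R.
have c0 : (0 < c)%R by rewrite divr_gt0.
have : ereal_inf (range f) < c%:E by rewrite inf0 lte_fin.
case/ereal_inf_lt => _ [z _ <-] fz.
have fzfin : f z = (fine (f z))%:E.
  by rewrite fineK // ge0_fin_numE // (lt_trans fz) // ltey.
pose a := fine (f z).
have a0 : (0 <= a)%R by have := f0 z; rewrite fzfin lee_fin.
have ac : (a < c)%R by move: fz; rewrite fzfin lte_fin.
have gap k : (c <= F k - a)%R by have := hF k; have := ac; rewrite /c; lra.
have nez k : xs k <> z.
  move=> h; have := gap k; rewrite /F h -/a subrr; move=> h'.
  by have := lt_le_trans c0 h'; rewrite ltxx.
have dpos k : (0 < d (xs k) z)%R.
  rewrite lt_def d0 andbT; apply/eqP => /deq; exact: nez.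
pose D n := (d (xs 0%N) z + \sum_(0 <= k < n) d (xs k) (xs k.+1))%R.
have Dge n : (d (xs n) z <= D n)%R.
  elim: n => [|n IH]; first by rewrite /D big_geq // addr0.
  rewrite /D big_nat_recr //= addrA.
  have := dtri (xs n.+1) (xs n) z; rewrite [d (xs n.+1) (xs n)]dsym.
  rewrite /D in IH; lra.
have Dpos n : (0 < D n)%R := lt_le_trans (dpos n) (Dge n).
have Ddiff m n : (m <= n)%N ->
    (D n - D m = \sum_(m <= k < n) d (xs k) (xs k.+1))%R.
  move=> mn; rewrite /D (@big_cat_nat _ _ _ m 0%N n _ _ (leq0n m) mn) /=; lra.
have Dmono m n : (m <= n)%N -> (D m <= D n)%R.
  move=> mn; have := Ddiff m n mn.
  have : (0 <= \sum_(m <= k < n) d (xs k) (xs k.+1))%R.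
    by apply: sumr_ge0 => i _; exact: d0.
  lra.
have Glb k : (c / D k)%:E <= G k.
  have := @gs_lb R X d f (xs k) z (F k) a dm (fE k) fzfin (fun h => nez k (esym h)).
  apply: le_trans; rewrite lee_fin.
  have := Dge k; have := gap k; have := dpos k; have := Dpos k; move=> h1 h2 h3 h4.
  rewrite ler_pdivlMr // mulrAC ler_pdivrMr //; nra.
have tlb2 k : ((c / D k * d (xs k) (xs k.+1))%:E <= t k).
  rewrite EFinM; apply: lee_wpmul2r; [by rewrite lee_fin d0| exact: Glb].
have Dunb M : (0 < M)%R -> exists N, forall k, (N <= k)%N -> (M < D k)%R.
  move=> M0; have := (cvgrPdist_lt _ _).1 Gfine (c / M)%R (divr_gt0 c0 M0).
  move=> [N1 _ HN1]; exists (maxn N0 N1) => k; rewrite geq_max => /andP [k0 k1].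
  have := HN1 k k1; rewrite /= sub0r normrN => hG.
  have Gf := HN0 k k0.
  have := Glb k; rewrite /G -(fineK Gf) lee_fin => hl.
  have hlt : (c / D k < c / M)%R := le_lt_trans hl (le_lt_trans (ler_norm _) hG).
  rewrite ltNge; apply/negP => hD.
  have hle : (c / M <= c / D k)%R.
    by rewrite ler_pdivlMr // mulrAC ler_pdivrMr // ler_pM2l.
  by rewrite ltNge hle in hlt.
have hsum j : exists m, ((j%:R / 2) <= \sum_(0 <= k < m) (d (xs k) (xs k.+1) / D k))%R.
  elim: j => [|j [m hm]]; first by exists 0%N; rewrite big_geq // mul0r.
  have [N hN] := Dunb (2 * D m)%R (mulr_gt0 (ltr0Sn _ _) (Dpos m)).
  pose n := maxn N m.
  have hn := hN n (leq_maxl _ _).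
  have mn : (m <= n)%N := leq_maxr _ _.
  exists n; rewrite (@big_cat_nat _ _ _ m 0%N n _ _ (leq0n m) mn) /=.
  have h1 : ((D n - D m) / D n <= \sum_(m <= k < n) (d (xs k) (xs k.+1) / D k))%R.
    rewrite Ddiff // mulr_suml; apply: ler_sum_nat => k /andP [mk kn].
    rewrite ler_pdivlMr // mulrAC ler_pdivrMr //; apply: ler_wpM2l => //.
    by apply: Dmono; exact: ltnW.
  have h2 : (1 / 2 <= (D n - D m) / D n)%R.
    by rewrite ler_pdivlMr // mul1r; lra.
  rewrite -natr1 mulrDl; lra.
have S0 : 0 <= S by apply: nneseries_ge0 => n _ _; exact: t0.
have Sf : S = (fine S)%:E by rewrite fineK // ge0_fin_numE // ltey.
pose s := fine S.
have s0 : (0 <= s)%R by move: S0; rewrite Sf lee_fin.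
have [j hj] : exists j : nat, (2 * s / c < j%:R)%R.
  exists (Num.Def.archi_bound (2 * s / c)); apply: archi_boundP.
  by rewrite divr_ge0 ?mulr_ge0 // ltW.
have [m hm] := hsum j.
have hc : (c * \sum_(0 <= k < m) (d (xs k) (xs k.+1) / D k))%:E <= \sum_(0 <= k < m) t k.
  rewrite mulr_sumr -sumEFin; apply: lee_sum => k _; apply: le_trans (tlb2 k).
  by rewrite lee_fin le_eqVlt; apply/orP; left; apply/eqP; ring.
have := le_trans hc (psumS m); rewrite Sf lee_fin -/s => hs.
rewrite ltr_pdivrMr // in hj.
have : (c * (j%:R / 2) <= c * \sum_(0 <= k < m) (d (xs k) (xs k.+1) / D k))%R.
  by rewrite ler_pM2l.
move=> h; have e1 : (c * (j%:R / 2) = (j%:R * c) / 2)%R by ring.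
have hj' : (2 * s < j%:R * c)%R by exact: hj.
rewrite e1 in h; have h3 := le_trans h hs; move: h3 hj'.
generalize (j%:R * c)%R => Q; move: Q; clear -s; move: s; clear; move=> s Q; lra.
Qed.

Lemma tele_sum (R : realType) (F : nat -> R) N :
  (\sum_(0 <= k < N) (F k - F k.+1) = F 0%N - F N)%R.
Proof.
have h := telescope_sumr (fun k => - F k)%R (leq0n N).
rewrite (_ : (F 0%N - F N) = (- F N - - F 0%N))%R; last by rewrite opprK addrC.
rewrite -h; apply: eq_bigr => k _; by rewrite opprK addrC.
Qed.

Lemma claim2 (R : realType) (X : Type) (d : X -> X -> R) (f : X -> \bar R)
  x (a r q : R) :
  is_metric d -> complete_metric d -> lsc_fun d f -> (forall z, 0 <= f z) ->
  (forall z, f z != -oo) -> f x = a%:E -> (0 < r)%R -> (0 < q)%R -> (q < 1)%R ->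
  exists y, (d y x < r)%R /\ I_fun d f y <= (a / q)%:E.
Proof.
move=> dm cpl lsc f0 fnoo fx r0 q0 q1; have [d0 [deq [dsym dtri]]] := dm.
have a0 : (0 <= a)%R by have := f0 x; rewrite fx lee_fin.
pose lam0 := ((a + 1) / r)%R.
have lam00 : (0 < lam0)%R by rewrite divr_gt0 // ltr_wpDl.
have fxoo : f x != +oo by rewrite fx.
have [y0 [Ek1 Ek2]] := @ekeland R X d f lam0 x dm cpl lsc f0 fxoo lam00.
have finE z : f z != +oo -> f z = (fine (f z))%:E.
  by move=> h; rewrite fineK // ge0_fin_numE // ltey.
have fy0 : f y0 != +oo.
  rewrite -ltey; apply: le_lt_trans (leeDl _ _) (le_lt_trans Ek1 _).
    by rewrite lee_fin mulr_ge0 // ltW.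
  by rewrite fx ltry.
have dy0 : (d y0 x < r)%R.
  move: Ek1; rewrite (finE _ fy0) fx -EFinD lee_fin => h.
  have b0 : (0 <= fine (f y0))%R by have := f0 y0; rewrite (finE _ fy0) lee_fin.
  have hl : (lam0 * r = a + 1)%R by rewrite /lam0 divfK // gt_eqF.
  rewrite dsym ltNge; apply/negP => hr.
  have : (lam0 * r <= lam0 * d x y0)%R by rewrite ler_pM2l.
  lra.
pose lam n := (lam0 * q ^+ n)%R.
have lam_gt0 n : (0 < lam n)%R by rewrite mulr_gt0 // exprn_gt0.
have step : forall p : X * nat, exists v, f p.1 != +oo ->
    f v + (lam p.2.+1 * d p.1 v)%:E <= f p.1 /\
    forall z, f v <= f z + (lam p.2.+1 * d v z)%:E.
  move=> [u n] /=; case: (boolP (f u == +oo)) => [_|fu]; first by exists u.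
  have [v hv] := @ekeland R X d f (lam n.+1) u dm cpl lsc f0 fu (lam_gt0 n.+1).
  by exists v.
have [g hg] := choice step.
pose ys := fix ys n := if n is k.+1 then g (ys k, k) else y0.
have ysS : forall n, ys n.+1 = g (ys n, n) by [].
have inv : forall n, f (ys n) != +oo /\
    forall z, f (ys n) <= f z + (lam n * d (ys n) z)%:E.
  elim => [|n [IH1 IH2]].
    by split => // z; rewrite /lam expr0 mulr1; exact: Ek2.
  have [h1 h2] := hg (ys n, n) IH1.
  rewrite ysS; split => //.
  rewrite -ltey; apply: le_lt_trans (leeDl _ _) (le_lt_trans h1 _).
    by rewrite lee_fin mulr_ge0 // ltW.
  by rewrite ltey.
have stepn n : f (ys n.+1) + (lam n.+1 * d (ys n) (ys n.+1))%:E <= f (ys n).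
  by rewrite ysS; exact: (hg (ys n, n) (inv n).1).1.
have Gb n : global_slope d f (ys n) <= (lam n)%:E.
  by apply: gs_ub => //; [exact: (inv n).1|exact: ltW|exact: (inv n).2].
have G0 n : 0 <= global_slope d f (ys n) by exact: gs_ge0.
have lee_fin_d0 n : 0 <= (d (ys n) (ys n.+1))%:E by rewrite lee_fin d0.
pose F n := fine (f (ys n)).
have fE n : f (ys n) = (F n)%:E by apply: finE; exact: (inv n).1.
have tb n : global_slope d f (ys n) * (d (ys n) (ys n.+1))%:E <= ((F n - F n.+1) / q)%:E.
  apply: le_trans (lee_wpmul2r _ (Gb n)) _; first by rewrite lee_fin d0.
  have := stepn n; rewrite !fE -EFinD !lee_fin => h.
  rewrite ler_pdivlMr //.
  have -> : (lam n * d (ys n) (ys n.+1) * q = lam n.+1 * d (ys n) (ys n.+1))%R.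
    by rewrite /lam exprSr; ring.
  lra.
exists y0; split; first exact: dy0.
have Gfin n : global_slope d f (ys n) \is a fin_num.
  by rewrite ge0_fin_numE // (le_lt_trans (Gb n)) // ltry.
have F0a : (F 0%N <= a)%R.
  rewrite -lee_fin -fE -fx; apply: le_trans (leeDl _ _) Ek1.
  by rewrite lee_fin mulr_ge0 // ltW.
have FN0 N : (0 <= F N)%R by rewrite -lee_fin -fE.
apply: (@le_trans _ _ (\sum_(0 <= n <oo)
   (global_slope d f (ys n) * (d (ys n) (ys n.+1))%:E))).
  apply: ereal_inf_lbound; exists ys => //; split => //.
  apply/fine_cvgP; split.
    by apply: nearW => n /=.
  apply: (@squeeze_cvgr _ _ _ _ (fun=> 0%R) lam).
  - apply: nearW => n /=; rewrite fine_ge0 //= -lee_fin fineK //.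
  - by apply/cvgrPdist_lt => e e0; apply: nearW => n; rewrite subrr normr0.
  - rewrite -(mulr0 lam0); apply: cvgMr; apply: cvg_expr.
    by rewrite ger0_norm // ltW.
apply: lime_le.
  exact: (is_cvg_nneseries (fun n _ _ => mule_ge0 (G0 n) (lee_fin_d0 n))).
apply: nearW => N.
change (\sum_(0 <= n < N) (global_slope d f (ys n) * (d (ys n) (ys n.+1))%:E) <= (a / q)%:E).
apply: le_trans; first by apply: lee_sum => k _; exact: tb.

rewrite sumEFin lee_fin -mulr_suml tele_sum ler_pM2r ?invr_gt0 //.
by have := FN0 N; lra.
Qed.

Theorem theorem6p10 (R : realType) (X : Type) (d : X -> X -> R)
  (f : X -> \bar R) :
  is_metric d -> complete_metric d ->
  (forall x, f x != -oo) ->          (* f : X -> R u {+oo} *)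
  (exists x, f x != +oo) ->           (* proper *)
  lsc_fun d f ->                      (* lower semicontinuous *)
  ereal_inf (range f) = 0 ->          (* inf_X f = 0 *)
  forall x, f x = lsc_env d (I_fun d f) x.
Proof.
move=> dm cpl fnoo _ lsc inf0 x.
have f0 z : 0 <= f z by rewrite -inf0; apply: ereal_inf_lbound; exists z.
have IgeF y : f y <= I_fun d f y.
  apply: le_ereal_inf_tmp => _ [xs [xs0 cv] <-]; rewrite -xs0.
  exact: claim1.
apply/eqP; rewrite eq_le; apply/andP; split.
  apply: le_trans (lsc x) _; apply: ge_ereal_sup => _ [r r0 <-].
  apply: le_trans _ (ereal_sup_ubound _); last by exists r.
  apply: le_ereal_inf_tmp => _ [y hy <-].
  apply: le_trans (IgeF y); apply: ereal_inf_lbound; by exists y.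
case: (eqVneq (f x) +oo) => [->|fx]; first exact: leey.
have fxE : f x = (fine (f x))%:E by rewrite fineK // ge0_fin_numE // ltey.
set a := fine (f x) in fxE.
have a0 : (0 <= a)%R by have := f0 x; rewrite fxE lee_fin.
apply: ge_ereal_sup => _ [r r0 <-].
rewrite fxE; apply/lee_addgt0Pr => eps eps0.
pose q := ((a + 1) / (a + 1 + eps))%R.
have pa : (0 < a + 1 + eps)%R by lra.
have pa1 : (0 < a + 1)%R by lra.
have q0 : (0 < q)%R by rewrite divr_gt0.
have hq : (q * (a + 1 + eps) = a + 1)%R by rewrite /q divfK // gt_eqF.
have q1 : (q < 1)%R.
  by rewrite /q ltr_pdivrMr // mul1r; lra.
have [y [dy Iy]] := @claim2 R X d f x a r q dm cpl lsc f0 fnoo fxE r0 q0 q1.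
apply: le_trans (ereal_inf_lbound _) _; first by exists y.
apply: le_trans Iy _; rewrite -EFinD lee_fin ler_pdivrMr //.
nra.
Qed.
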